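(* Let $p>1$ and $q\ge p+1$, and let $f_{p,q}(t)=\sum_{j=1}^\infty j^{-p}\exp(i t j^q)$ for $t\in\mathbb{R}$. Then $f_{p,q}$, $\operatorname{Re}f_{p,q}$ and $\operatorname{Im}f_{p,q}$ are continuous on $\mathbb{R}$ but differentiable at no point. If moreover $q>p+1$, then none of them is Lipschitz continuous at any point of $\mathbb{R}$.
   Context: A function $g\colon\mathbb{R}\to\mathbb{C}$ is Lipschitz continuous at $t_0$ if there exist constants $L>0$, $\eta>0$ such that $|g(t)-g(t_0)|\le L|t-t_0|$ for all $t\in\,]t_0-\eta,t_0+\eta[$. *)

(* Defs.v *)
(* real analysis with Stdlib Reals.
   A complex-valued function g : R -> C is represented by its real and
   imaginary parts (gr, gi : R -> R). *)
From Stdlib Require Import Reals.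
Open Scope R_scope.

Definition cmod (a b : R) : R := sqrt (a * a + b * b).

(* the j-th term (j = n+1 >= 1) of f_{p,q}(t) = sum_j j^{-p} exp(i t j^q) *)
Definition term_re (p q t : R) (n : nat) : R :=
  Rpower (INR (S n)) (- p) * cos (t * Rpower (INR (S n)) q).
Definition term_im (p q t : R) (n : nat) : R :=
  Rpower (INR (S n)) (- p) * sin (t * Rpower (INR (S n)) q).

Definition ccontinuity_pt (gr gi : R -> R) (t0 : R) : Prop :=
  forall eps, 0 < eps -> exists delta, 0 < delta /\
    forall t, Rabs (t - t0) < delta -> cmod (gr t - gr t0) (gi t - gi t0) < eps.

Definition cderivable_pt (gr gi : R -> R) (t0 : R) : Prop :=
  exists lr li, forall eps, 0 < eps -> exists delta, 0 < delta /\
    forall h, h <> 0 -> Rabs h < delta ->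
      cmod ((gr (t0 + h) - gr t0) / h - lr) ((gi (t0 + h) - gi t0) / h - li) < eps.

Definition lipschitz_at (g : R -> R) (t0 : R) : Prop :=
  exists L eta, 0 < L /\ 0 < eta /\
    forall t, t0 - eta < t < t0 + eta -> Rabs (g t - g t0) <= L * Rabs (t - t0).

Definition clipschitz_at (gr gi : R -> R) (t0 : R) : Prop :=
  exists L eta, 0 < L /\ 0 < eta /\
    forall t, t0 - eta < t < t0 + eta ->
      cmod (gr t - gr t0) (gi t - gi t0) <= L * Rabs (t - t0).

(* Main.v *)
Require Import Defs.
From Stdlib Require Import Reals Lra Lia Psatz FunctionalExtensionality.
From Coquelicot Require Import Coquelicot.
Open Scope R_scope.

Definition Cont (h : R -> R) := forall x, continuous h x.

Definition A1 (b : R) (h : R -> R) (x : R) : R := RInt h x (x + b).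
Definition Ak (b : R) (k : nat) (h : R -> R) : R -> R := Nat.iter k (A1 b) h.

Lemma Cont_exRInt h a c : Cont h -> ex_RInt h a c.
Proof. intros H; apply (ex_RInt_continuous (V:=R_CompleteNormedModule)); intros; apply H. Qed.

Lemma A1_deriv b h x : Cont h -> is_derive (A1 b h) x (h (x+b) - h x).
Proof.
  intros H.
  assert (E : forall y, A1 b h y = RInt h 0 (y+b) - RInt h 0 y).
  { intros y; unfold A1.
    rewrite <- (RInt_Chasles (V:=R_CompleteNormedModule) h 0 y (y+b)) by apply Cont_exRInt, H.
    unfold plus; cbn. ring. }
  assert (D : forall z, is_derive (RInt h 0) z (h z)).
  { intros z. apply (is_derive_RInt (V:=R_NormedModule) h (RInt h 0) 0).
    - apply filter_forall. intros y. apply (RInt_correct (V:=R_CompleteNormedModule)), Cont_exRInt, H.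
    - apply H. }
  apply is_derive_ext with (f := fun y => RInt h 0 (y+b) - RInt h 0 y).
  { intros; symmetry; apply E. }
  apply (is_derive_minus (fun y => RInt h 0 (y+b)) (RInt h 0)); [|apply D].
  assert (Hg: is_derive (fun y:R => y+b) x 1) by (auto_derive; auto; ring).
  pose proof (is_derive_comp (RInt h 0) (fun y => y+b) x (h (x+b)) 1 (D _) Hg) as K.
  replace (h (x+b)) with (scal (1:R) (h (x+b))); [exact K|].
  unfold scal; simpl; unfold mult; simpl; ring.
Qed.

Lemma A1_cont b h : Cont h -> Cont (A1 b h).
Proof.
  intros H x. apply (ex_derive_continuous (V:=R_NormedModule)). eexists. apply A1_deriv, H.
Qed.

Lemma Ak_S b k h : Ak b (S k) h = A1 b (Ak b k h).
Proof. reflexivity. Qed.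

Lemma Ak_cont b k h : Cont h -> Cont (Ak b k h).
Proof.
  intros H; induction k as [|k IH]; [exact H|].
  rewrite Ak_S; apply A1_cont, IH.
Qed.

Lemma A1_plus b f g : Cont f -> Cont g ->
  A1 b (fun y => f y + g y) = fun x => A1 b f x + A1 b g x.
Proof.
  intros Hf Hg; apply functional_extensionality; intros x; unfold A1.
  pose proof (RInt_plus (V:=R_CompleteNormedModule) f g x (x+b)
    (Cont_exRInt _ _ _ Hf) (Cont_exRInt _ _ _ Hg)) as K.
  exact K.
Qed.

Lemma A1_scal b c f : Cont f ->
  A1 b (fun y => c * f y) = fun x => c * A1 b f x.
Proof.
  intros Hf; apply functional_extensionality; intros x; unfold A1.
  pose proof (RInt_scal (V:=R_CompleteNormedModule) f x (x+b) c
    (Cont_exRInt _ _ _ Hf)) as K.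
  exact K.
Qed.

Lemma Ak_plus b k f g : Cont f -> Cont g ->
  Ak b k (fun y => f y + g y) = fun x => Ak b k f x + Ak b k g x.
Proof.
  intros Hf Hg; induction k as [|k IH]; [reflexivity|].
  rewrite !Ak_S, IH. apply A1_plus; apply Ak_cont; assumption.
Qed.

Lemma Ak_scal b k c f : Cont f ->
  Ak b k (fun y => c * f y) = fun x => c * Ak b k f x.
Proof.
  intros Hf; induction k as [|k IH]; [reflexivity|].
  rewrite !Ak_S, IH. apply A1_scal; apply Ak_cont; assumption.
Qed.

Lemma A1_zero b : A1 b (fun _ => 0) = fun _ => 0.
Proof.
  apply functional_extensionality; intros x; unfold A1.
  rewrite RInt_const. unfold scal; simpl; unfold mult; simpl; ring.
Qed.

Lemma Ak_zero b k : Ak b k (fun _ => 0) = fun _ => 0.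
Proof.
  induction k as [|k IH]; [reflexivity|]. rewrite Ak_S, IH. apply A1_zero.
Qed.

Lemma Ak_bound b k h x B : Cont h -> 0 <= b ->
  (forall y, x <= y <= x + INR k * b -> Rabs (h y) <= B) ->
  Rabs (Ak b k h x) <= B * b ^ k.
Proof.
  intros Hc Hb. revert x. induction k as [|k IH]; intros x HB.
  - simpl. rewrite Rmult_1_r. apply HB. simpl; lra.
  - rewrite Ak_S. unfold A1.
    eapply Rle_trans.
    { apply (abs_RInt_le_const _ x (x+b) (B * b ^ k)). lra.
      apply Cont_exRInt, Ak_cont, Hc.
      intros t Ht. apply IH. intros y Hy. apply HB. rewrite S_INR.
      split; [lra|]. nra. }
    simpl. lra.
Qed.

Definition sg (b w : R) : R := if Req_EM_T w 0 then b else 2 * sin (w * b / 2) / w.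

Lemma cos_cont w c : Cont (fun y => cos (w * y + c)).
Proof.
  intros x. apply (ex_derive_continuous (V:=R_NormedModule)). auto_derive. auto.
Qed.

Lemma A1_cos b w c : A1 b (fun y => cos (w * y + c)) = fun x => sg b w * cos (w * x + w * b / 2 + c).
Proof.
  apply functional_extensionality; intros x; unfold A1, sg.
  destruct (Req_EM_T w 0) as [->|Hw].
  - replace (fun y => cos (0 * y + c)) with (fun _ : R => cos c)
      by (apply functional_extensionality; intros; f_equal; ring).
    rewrite RInt_const. unfold scal; cbn; unfold mult; cbn.
    replace (0 * x + 0 * b / 2 + c) with c by field. ring.
  - assert (K : is_RInt (fun y => cos (w * y + c)) x (x + b)
                 (minus (sin (w * (x+b) + c) / w) (sin (w * x + c) / w))).
    { apply (is_RInt_derive (V:=R_CompleteNormedModule) (fun y => sin (w * y + c) / w)).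
      - intros t _. auto_derive. auto. field. auto.
      - intros t _. apply cos_cont. }
    rewrite (is_RInt_unique _ _ _ _ K). unfold minus, plus, opp; simpl.
    set (m := w * x + w * b / 2 + c). set (d := w * b / 2).
    replace (w * (x + b) + c) with (m + d) by (unfold m, d; field).
    replace (w * x + c) with (m - d) by (unfold m, d; field).
    rewrite sin_plus, sin_minus. field. auto.
Qed.

Lemma Ak_cos b k w c : Ak b k (fun y => cos (w * y + c)) =
  fun x => sg b w ^ k * cos (w * x + INR k * (w * b / 2) + c).
Proof.
  induction k as [|k IH].
  - apply functional_extensionality; intros x. simpl.
    replace (w * x + 0 * (w * b / 2) + c) with (w * x + c) by field. ring.
  - rewrite Ak_S, IH.
    replace (fun x => sg b w ^ k * cos (w * x + INR k * (w * b / 2) + c))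
      with (fun x => sg b w ^ k * cos (w * x + (INR k * (w * b / 2) + c)))
      by (apply functional_extensionality; intros; f_equal; f_equal; field).
    rewrite A1_scal by apply cos_cont. rewrite A1_cos.
    apply functional_extensionality; intros x. rewrite S_INR. simpl.
    replace (w * x + w * b / 2 + (INR k * (w * b / 2) + c)) with
      (w * x + (INR k + 1) * (w * b / 2) + c) by field. ring.
Qed.

Lemma Ak_Sr b k h : Ak b (S k) h = Ak b k (A1 b h).
Proof. unfold Ak. apply Nat.iter_succ_r. Qed.

Lemma sg_zero b w : w <> 0 -> sin (w * b / 2) = 0 -> sg b w = 0.
Proof.
  intros Hw Hs; unfold sg; destruct (Req_EM_T w 0); [contradiction|].
  rewrite Hs; field; auto.
Qed.

Lemma ycos_cont w c : Cont (fun y => y * cos (w * y + c)).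
Proof.
  intros x. apply (ex_derive_continuous (V:=R_NormedModule)). auto_derive. auto.
Qed.

Lemma A1_ycos b w c : w <> 0 -> sin (w * b / 2) = 0 ->
  A1 b (fun y => y * cos (w * y + c)) = fun x => (b / w) * cos (w * x + (c - PI / 2)).
Proof.
  intros Hw Hs.
  assert (Cb : cos (w * b) = 1).
  { replace (w * b) with (2 * (w * b / 2)) by field. rewrite cos_2a_sin, Hs. ring. }
  assert (Sb : sin (w * b) = 0).
  { replace (w * b) with (2 * (w * b / 2)) by field. rewrite sin_2a, Hs. ring. }
  apply functional_extensionality; intros x; unfold A1.
  assert (K : is_RInt (fun y => y * cos (w * y + c)) x (x + b)
     (minus ((x+b) * sin (w * (x+b) + c) / w + cos (w * (x+b) + c) / (w*w))
            (x * sin (w * x + c) / w + cos (w * x + c) / (w*w)))).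
  { apply (is_RInt_derive (V:=R_CompleteNormedModule)
      (fun y => y * sin (w * y + c) / w + cos (w * y + c) / (w*w))).
    - intros t _. auto_derive. repeat split; auto. field. auto.
    - intros t _. apply ycos_cont. }
  rewrite (is_RInt_unique _ _ _ _ K). unfold minus, plus, opp; simpl.
  replace (w * (x + b) + c) with ((w * x + c) + w * b) by ring.
  replace (w * x + (c - PI / 2)) with ((w * x + c) - PI / 2) by ring.
  generalize (w * x + c); intros z.
  rewrite sin_plus, cos_plus, Cb, Sb, cos_minus, cos_PI2, sin_PI2.
  field. auto.
Qed.

Lemma Ak_ycos_zero b k w c : (2 <= k)%nat -> w <> 0 -> sin (w * b / 2) = 0 ->
  Ak b k (fun y => y * cos (w * y + c)) = fun _ => 0.
Proof.
  intros Hk Hw Hs.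
  destruct k as [|[|k]]; try lia.
  rewrite Ak_Sr, Ak_Sr, A1_ycos by auto.
  rewrite A1_scal by apply cos_cont. rewrite A1_cos, sg_zero by auto.
  replace (fun x => b / w * (0 * cos (w * x + w * b / 2 + (c - PI / 2)))) with (fun _ : R => 0)
    by (apply functional_extensionality; intros; ring).
  apply Ak_zero.
Qed.

Lemma Ak_cos_zero b k w c x : (1 <= k)%nat -> w <> 0 -> sin (w * b / 2) = 0 ->
  Ak b k (fun y => cos (w * y + c)) x = 0.
Proof.
  intros Hk Hw Hs. rewrite Ak_cos, sg_zero by auto.
  destruct k; [lia|]. simpl. ring.
Qed.

Lemma Cont_cpt f : (forall x, continuity_pt f x) -> Cont f.
Proof. intros H x. apply continuity_pt_filterlim, H. Qed.

Lemma cpt_Cont f : Cont f -> forall x, continuity_pt f x.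
Proof. intros H x. apply continuity_pt_filterlim, H. Qed.

Lemma Cont_plus f g : Cont f -> Cont g -> Cont (fun x => f x + g x).
Proof. intros Hf Hg. apply Cont_cpt; intros x.
  apply (continuity_pt_plus f g); apply cpt_Cont; auto. Qed.

Lemma Cont_minus f g : Cont f -> Cont g -> Cont (fun x => f x - g x).
Proof. intros Hf Hg. apply Cont_cpt; intros x.
  apply (continuity_pt_minus f g); apply cpt_Cont; auto. Qed.

Lemma Cont_mult f g : Cont f -> Cont g -> Cont (fun x => f x * g x).
Proof. intros Hf Hg. apply Cont_cpt; intros x.
  apply (continuity_pt_mult f g); apply cpt_Cont; auto. Qed.

Lemma Cont_const c : Cont (fun _ => c).
Proof. apply Cont_cpt; intros x. apply continuity_pt_const. intros a b; reflexivity. Qed.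

Lemma Cont_id : Cont (fun x => x).
Proof. apply Cont_cpt; intros x. apply derivable_continuous_pt, derivable_pt_id. Qed.

Lemma Cont_shift f t0 : Cont f -> Cont (fun s => f (t0 + s)).
Proof.
  intros Hf. apply Cont_cpt; intros x.
  apply (continuity_pt_comp (fun s => t0 + s) f).
  - apply (continuity_pt_plus (fun _ => t0) (fun s => s)).
    apply continuity_pt_const; intros a b; reflexivity.
    apply derivable_continuous_pt, derivable_pt_id.
  - apply cpt_Cont, Hf.
Qed.

Lemma Cont_sum (F : nat -> R -> R) M : (forall j, Cont (F j)) ->
  Cont (fun s => sum_f_R0 (fun j => F j s) M).
Proof.
  intros H; induction M as [|M IH].
  - apply H.
  - apply (Cont_plus (fun s => sum_f_R0 (fun j => F j s) M) (F (S M))); auto.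
Qed.

Lemma Ak_sum b k (F : nat -> R -> R) M x : (forall j, Cont (F j)) ->
  Ak b k (fun s => sum_f_R0 (fun j => F j s) M) x = sum_f_R0 (fun j => Ak b k (F j) x) M.
Proof.
  intros H; induction M as [|M IH].
  - reflexivity.
  - change (Ak b k (fun s => sum_f_R0 (fun j => F j s) M + F (S M) s) x =
            sum_f_R0 (fun j => Ak b k (F j) x) M + Ak b k (F (S M)) x).
    rewrite Ak_plus. rewrite IH. reflexivity.
    apply Cont_sum; auto. apply H.
Qed.

Definition lam (q : R) (j : nat) : R := Rpower (INR (S j)) q.
Definition amp (p : R) (j : nat) : R := Rpower (INR (S j)) (- p).
Definition gt (p q th t : R) (j : nat) : R := amp p j * cos (t * lam q j + th).

Lemma INRS_pos j : 0 < INR (S j).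
Proof. apply lt_0_INR; lia. Qed.

Lemma amp_pos p j : 0 < amp p j.
Proof. unfold amp, Rpower. apply exp_pos. Qed.

Lemma gt_abs p q th t j : Rabs (gt p q th t j) <= amp p j.
Proof.
  unfold gt. rewrite Rabs_mult, (Rabs_pos_eq (amp p j)) by (left; apply amp_pos).
  pose proof (Rabs_le (cos (t * lam q j + th)) 1 (COS_bound _)) as _.
  pose proof (COS_bound (t * lam q j + th)) as [H1 H2].
  pose proof (amp_pos p j).
  assert (Rabs (cos (t * lam q j + th)) <= 1) by (apply Rabs_le; lra). nra.
Qed.

Lemma cpt_intro f x : (forall e, 0 < e -> exists d, 0 < d /\ forall y, Rabs (y - x) < d -> Rabs (f y - f x) < e) -> continuity_pt f x.
Proof.
  intros H e He. destruct (H e He) as [d [Hd K]]. exists d; split; [lra|].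
  intros y [_ Hy]. apply K. exact Hy.
Qed.

Lemma cpt_elim f x : continuity_pt f x -> forall e, 0 < e -> exists d, 0 < d /\ forall y, Rabs (y - x) < d -> Rabs (f y - f x) < e.
Proof.
  intros H e He. destruct (H e He) as [d [Hd K]]. exists d; split; [lra|].
  intros y Hy. destruct (Req_dec y x) as [->|Hne].
  - rewrite Rminus_diag, Rabs_R0; lra.
  - apply (K y). split; [split; [exact I| auto] | exact Hy].
Qed.

Section Ser.
Variables (p q th A : R) (g : R -> R).
Hypothesis hA : infinite_sum (amp p) A.
Hypothesis hg : forall t, infinite_sum (gt p q th t) (g t).

Lemma AP_le M : sum_f_R0 (amp p) M <= A.
Proof.
  apply (growing_ineq (sum_f_R0 (amp p))).
  - intros n. simpl. pose proof (amp_pos p (S n)). lra.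
  - exact hA.
Qed.

Lemma tail_diff t M d :
  Rabs (sum_f_R0 (gt p q th t) (M + d) - sum_f_R0 (gt p q th t) M)
  <= sum_f_R0 (amp p) (M + d) - sum_f_R0 (amp p) M.
Proof.
  induction d as [|d IH].
  - rewrite Nat.add_0_r, !Rminus_diag, Rabs_R0; lra.
  - rewrite Nat.add_succ_r. simpl.
    pose proof (gt_abs p q th t (S (M + d))).
    replace (sum_f_R0 (gt p q th t) (M + d) + gt p q th t (S (M + d)) - sum_f_R0 (gt p q th t) M)
      with ((sum_f_R0 (gt p q th t) (M + d) - sum_f_R0 (gt p q th t) M) + gt p q th t (S (M + d))) by ring.
    eapply Rle_trans; [apply Rabs_triang|]. lra.
Qed.

Lemma rem_bound t M : Rabs (g t - sum_f_R0 (gt p q th t) M) <= A - sum_f_R0 (amp p) M.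
Proof.
  apply Rnot_lt_le; intros Hc.
  set (e := Rabs (g t - sum_f_R0 (gt p q th t) M) - (A - sum_f_R0 (amp p) M)).
  assert (He : e > 0) by (unfold e; lra).
  destruct (hg t e He) as [N HN].
  specialize (HN (M + N)%nat ltac:(lia)). unfold Rdist in HN.
  pose proof (tail_diff t M N). pose proof (AP_le (M + N)).
  assert (Rabs (g t - sum_f_R0 (gt p q th t) M) <=
     Rabs (sum_f_R0 (gt p q th t) (M + N) - g t) + Rabs (sum_f_R0 (gt p q th t) (M + N) - sum_f_R0 (gt p q th t) M)).
  { replace (g t - sum_f_R0 (gt p q th t) M) with
      (- (sum_f_R0 (gt p q th t) (M + N) - g t) + (sum_f_R0 (gt p q th t) (M + N) - sum_f_R0 (gt p q th t) M)) by ring.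
    eapply Rle_trans; [apply Rabs_triang|]. rewrite Rabs_Ropp. lra. }
  unfold e in HN. lra.
Qed.

Lemma rem_small e : 0 < e -> exists M0, forall M, (M0 <= M)%nat -> A - sum_f_R0 (amp p) M < e.
Proof.
  intros He. destruct (hA e He) as [N HN]. exists N. intros M HM.
  specialize (HN M HM). unfold Rdist in HN. pose proof (AP_le M).
  rewrite Rabs_left1 in HN by lra. lra.
Qed.

Lemma gt_cpt j : forall t, continuity_pt (fun t => gt p q th t j) t.
Proof.
  intros t. apply continuity_pt_filterlim.
  apply (ex_derive_continuous (V:=R_NormedModule)). unfold gt. auto_derive. auto.
Qed.

Lemma S_cpt M : forall t, continuity_pt (fun t => sum_f_R0 (gt p q th t) M) t.
Proof.
  induction M as [|M IH]; intros t.
  - simpl. apply gt_cpt.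
  - simpl. apply (continuity_pt_plus (fun t => sum_f_R0 (gt p q th t) M) (fun t => gt p q th t (S M))).
    apply IH. apply gt_cpt.
Qed.

Lemma g_cpt t0 : continuity_pt g t0.
Proof.
  apply cpt_intro. intros e He.
  destruct (rem_small (e/3) ltac:(lra)) as [M HM]. specialize (HM M (le_n _)).
  destruct (cpt_elim _ _ (S_cpt M t0) (e/3) ltac:(lra)) as [d [Hd K]].
  exists d; split; [exact Hd|]. intros y Hy. specialize (K y Hy).
  pose proof (rem_bound y M). pose proof (rem_bound t0 M).
  set (Sy := sum_f_R0 (gt p q th y) M) in *. set (S0 := sum_f_R0 (gt p q th t0) M) in *.
  replace (g y - g t0) with ((g y - Sy) + (Sy - S0) - (g t0 - S0)) by ring.
  eapply Rle_lt_trans; [apply Rabs_triang|].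
  eapply Rle_lt_trans; [apply Rplus_le_compat_l; rewrite Rabs_Ropp; apply Rle_refl|].
  eapply Rle_lt_trans; [apply Rplus_le_compat_r; apply Rabs_triang|]. lra.
Qed.

End Ser.

Lemma PI_gt3 : 3 < PI. Proof. pose proof PI2_3_2. lra. Qed.

Lemma Rpower_split x y : 0 < x -> Rpower x (y + 1) = Rpower x y * x.
Proof. intros Hx. rewrite Rpower_plus, Rpower_1 by exact Hx. reflexivity. Qed.

Lemma Rpower_pos x y : 0 < Rpower x y.
Proof. unfold Rpower; apply exp_pos. Qed.

Lemma pow_diff_lb x y q : 1 <= q -> 0 < y -> y <= x ->
  Rpower y (q - 1) * (x - y) <= Rpower x q - Rpower y q /\
  Rpower x (q - 1) * (x - y) <= Rpower x q - Rpower y q.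
Proof.
  intros Hq Hy Hxy.
  assert (E1 : Rpower x q = Rpower x (q - 1) * x) by
    (rewrite <- Rpower_split by lra; f_equal; ring).
  assert (E2 : Rpower y q = Rpower y (q - 1) * y) by
    (rewrite <- Rpower_split by lra; f_equal; ring).
  rewrite E1, E2.
  assert (Rpower y (q - 1) <= Rpower x (q - 1)) by (apply Rle_Rpower_l; lra).
  pose proof (Rpower_pos y (q-1)).
  split; nra.
Qed.

Lemma lam_gap q n j : 1 <= q -> j <> n ->
  Rpower (INR (S n)) (q - 1) * Rabs (INR j - INR n) <= Rabs (lam q j - lam q n).
Proof.
  intros Hq Hjn. unfold lam.
  assert (E : INR j - INR n = INR (S j) - INR (S n)) by (rewrite !S_INR; ring).
  rewrite E. pose proof (INRS_pos j). pose proof (INRS_pos n).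
  destruct (proj1 (Nat.lt_gt_cases j n) Hjn) as [Hc|Hc].
  - assert (INR (S j) < INR (S n)) by (apply lt_INR; lia).
    destruct (pow_diff_lb (INR (S n)) (INR (S j)) q Hq) as [_ K]; try lra.
    rewrite (Rabs_left (INR (S j) - INR (S n))) by lra.
    assert (Rpower (INR (S j)) q <= Rpower (INR (S n)) q) by (apply Rle_Rpower_l; lra).
    rewrite (Rabs_left1 (Rpower (INR (S j)) q - Rpower (INR (S n)) q)) by lra. lra.
  - assert (INR (S n) < INR (S j)) by (apply lt_INR; lia).
    destruct (pow_diff_lb (INR (S j)) (INR (S n)) q Hq) as [K _]; try lra.
    rewrite (Rabs_pos_eq (INR (S j) - INR (S n))) by lra.
    assert (Rpower (INR (S n)) q <= Rpower (INR (S j)) q) by (apply Rle_Rpower_l; lra).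
    rewrite (Rabs_pos_eq (Rpower (INR (S j)) q - Rpower (INR (S n)) q)) by lra. lra.
Qed.

Lemma amp_ratio p n j (k : nat) : 0 < p -> p <= INR k -> j <> n ->
  amp p j <= Rpower 2 p * amp p n * Rabs (INR j - INR n) ^ k.
Proof.
  intros Hp Hk Hjn. unfold amp. rewrite !Rpower_Ropp.
  set (d := Rabs (INR j - INR n)).
  assert (Hd : 1 <= d).
  { unfold d. destruct (proj1 (Nat.lt_gt_cases j n) Hjn) as [Hc|Hc].
    - rewrite Rabs_left1. assert (INR (S j) <= INR n) by (apply le_INR; lia). rewrite S_INR in *. lra.
      assert (INR j < INR n) by (apply lt_INR; lia). lra.
    - rewrite Rabs_pos_eq. assert (INR (S n) <= INR j) by (apply le_INR; lia). rewrite S_INR in *. lra.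
      assert (INR n < INR j) by (apply lt_INR; lia). lra. }
  pose proof (INRS_pos j) as Hj. pose proof (INRS_pos n) as Hn.
  assert (Hnu : INR (S n) <= 2 * d * INR (S j)).
  { assert (INR (S n) <= INR (S j) + d).
    { unfold d. rewrite !S_INR. pose proof (Rle_abs (INR n - INR j)) as Hra.
      rewrite Rabs_minus_sym in Hra. lra. }
    assert (1 <= INR (S j)) by (apply (le_INR 1); lia). clearbody d. nra. }
  assert (K1 : Rpower (INR (S n)) p <= Rpower 2 p * Rpower d p * Rpower (INR (S j)) p).
  { rewrite !Rpower_mult_distr by lra. apply Rle_Rpower_l; lra. }
  assert (K2 : Rpower d p <= d ^ k).
  { rewrite <- Rpower_pow by lra. apply Rle_Rpower; lra. }
  pose proof (Rpower_pos (INR (S n)) p). pose proof (Rpower_pos (INR (S j)) p).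
  pose proof (Rpower_pos 2 p). pose proof (Rpower_pos d p).
  assert (Hdk : 0 < d ^ k) by (apply pow_lt; lra).
  apply (Rmult_le_reg_r (Rpower (INR (S n)) p * Rpower (INR (S j)) p)). nra.
  replace (/ Rpower (INR (S j)) p * (Rpower (INR (S n)) p * Rpower (INR (S j)) p))
    with (Rpower (INR (S n)) p) by (field; lra).
  replace (Rpower 2 p * / Rpower (INR (S n)) p * d ^ k * (Rpower (INR (S n)) p * Rpower (INR (S j)) p))
    with (Rpower 2 p * d ^ k * Rpower (INR (S j)) p) by (field; lra).
  nra.
Qed.

Lemma nu_over_lam p q n : 1 < p -> p + 1 <= q -> INR (S n) / lam q n <= amp p n.
Proof.
  intros Hp Hq. unfold lam, amp. pose proof (INRS_pos n).
  assert (INR (S n) / Rpower (INR (S n)) q = Rpower (INR (S n)) (1 - q)).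
  { unfold Rminus. rewrite Rpower_plus, Rpower_1, Rpower_Ropp by lra. reflexivity. }
  rewrite H0. apply Rle_Rpower. assert (1 <= INR (S n)) by (apply (le_INR 1); lia). lra. lra.
Qed.

Lemma amp_le_inv p n : 1 <= p -> amp p n <= / INR (S n).
Proof.
  intros Hp. unfold amp. pose proof (INRS_pos n).
  rewrite <- (Rpower_1 (INR (S n))) at 2 by lra. rewrite <- Rpower_Ropp.
  apply Rle_Rpower. assert (1 <= INR (S n)) by (apply (le_INR 1); lia). lra. lra.
Qed.

Definition wf (n j : nat) : R := if Nat.eq_dec j n then 0 else / (INR j - INR n) ^ 2.

Lemma wsum_aux n M :
  ((M < n)%nat -> sum_f_R0 (wf n) M <= 2 / (INR n - INR M)) /\
  ((n <= M)%nat -> sum_f_R0 (wf n) M <= 4 - 2 / (INR M - INR n + 1)).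
Proof.
  induction M as [|M [IH1 IH2]].
  - simpl. unfold wf. destruct (Nat.eq_dec 0 n) as [<-|Hn]; split; intros H; try lia.
    + simpl. lra.
    + assert (1 <= INR n) by (apply (le_INR 1); lia). simpl.
      replace (/ ((0 - INR n) * ((0 - INR n) * 1))) with (/ (INR n * INR n)) by (f_equal; ring).
      apply (Rmult_le_reg_r (INR n * INR n)). nra. field_simplify; nra.
  - change (sum_f_R0 (wf n) (S M)) with (sum_f_R0 (wf n) M + wf n (S M)).
    assert (Ew : wf n (S M) = if Nat.eq_dec (S M) n then 0 else / (INR (S M) - INR n)^2) by reflexivity.
    rewrite Ew; clear Ew. rewrite !S_INR. destruct (Nat.eq_dec (S M) n) as [Hn|Hn].
    + split; intros H; [lia|]. subst n. rewrite Rplus_0_r.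
      assert (K := IH1 (Nat.lt_succ_diag_r M)). rewrite S_INR in *.
      replace (INR M + 1 - (INR M + 1) + 1) with 1 by ring.
      replace (INR M + 1 - INR M) with 1 in K by ring. lra.
    + split; intros H.
      * assert (K := IH1 ltac:(lia)).
        assert (Hd : INR M + 2 <= INR n) by (replace 2 with (INR 2) by reflexivity; rewrite <- plus_INR; apply le_INR; lia).
        set (x := INR n - INR M) in *.
        replace (INR M + 1 - INR n) with (- (x - 1)) by (unfold x; ring).
        replace (INR n - (INR M + 1)) with (x - 1) by (unfold x; ring).
        assert (2 <= x) by (unfold x; lra). clearbody x.
        replace ((- (x - 1)) ^ 2) with ((x-1)^2) by ring.
        apply Rle_trans with (2 / x + / (x - 1) ^ 2). lra.
        apply (Rmult_le_reg_r (x * (x-1)^2)). nra.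
        field_simplify; try lra; nra.
      * assert (K := IH2 ltac:(lia)).
        assert (Hd : INR n <= INR M) by (apply le_INR; lia).
        set (x := INR M - INR n + 1) in *.
        replace (INR M + 1 - INR n) with x by (unfold x; ring).
        replace (INR M + 1 - INR n + 1) with (x + 1) by (unfold x; ring).
        assert (1 <= x) by (unfold x; lra). clearbody x.
        apply Rle_trans with (4 - 2 / x + / x ^ 2). lra.
        apply (Rmult_le_reg_r (x^2 * (x+1))). nra.
        field_simplify; try lra; nra.
Qed.

Lemma wsum n M : sum_f_R0 (wf n) M <= 4.
Proof.
  destruct (Nat.lt_ge_cases M n) as [H|H].
  - pose proof (proj1 (wsum_aux n M) H).
    assert (INR M + 1 <= INR n) by (rewrite <- S_INR; apply le_INR; lia).
    apply Rle_trans with (2 / (INR n - INR M)); auto.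
    apply (Rmult_le_reg_r (INR n - INR M)). lra. field_simplify; lra.
  - pose proof (proj2 (wsum_aux n M) H).
    assert (INR n <= INR M) by (apply le_INR; lia).
    assert (0 < 2 / (INR M - INR n + 1)) by (apply Rdiv_lt_0_compat; lra). lra.
Qed.

Lemma wf_nonneg n j : 0 <= wf n j.
Proof. unfold wf. destruct (Nat.eq_dec j n). lra. apply Rlt_le, Rinv_0_lt_compat, pow2_gt_0.
  intro E. apply n0. apply INR_eq. lra. Qed.

Lemma ind_sum0 n m c : (m < n)%nat ->
  sum_f_R0 (fun j => if Nat.eq_dec j n then c else 0) m = 0.
Proof.
  induction m as [|m IH]; intros H.
  - change (sum_f_R0 (fun j => if Nat.eq_dec j n then c else 0) 0) with (if Nat.eq_dec 0 n then c else 0).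
    destruct (Nat.eq_dec 0 n); [lia|reflexivity].
  - change (sum_f_R0 (fun j => if Nat.eq_dec j n then c else 0) (S m)) with
      (sum_f_R0 (fun j => if Nat.eq_dec j n then c else 0) m + if Nat.eq_dec (S m) n then c else 0).
    destruct (Nat.eq_dec (S m) n); [lia|]. rewrite IH by lia. ring.
Qed.

Lemma ind_sum n M c : (n <= M)%nat ->
  sum_f_R0 (fun j => if Nat.eq_dec j n then c else 0) M = c.
Proof.
  induction M as [|M IH]; intros H.
  - assert (n = 0%nat) by lia. subst n. reflexivity.
  - change (sum_f_R0 (fun j => if Nat.eq_dec j n then c else 0) (S M)) with
      (sum_f_R0 (fun j => if Nat.eq_dec j n then c else 0) M + if Nat.eq_dec (S M) n then c else 0).
    destruct (Nat.eq_dec (S M) n) as [E|E].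
    + rewrite ind_sum0 by lia. ring.
    + rewrite IH by lia. ring.
Qed.

Section Core.
Variables (p q th A : R) (g : R -> R) (k K0 : nat).
Hypothesis hA : infinite_sum (amp p) A.
Hypothesis hg : forall t, infinite_sum (gt p q th t) (g t).
Hypothesis hp : 1 < p.
Hypothesis hq : p + 1 <= q.
Hypothesis hk : p + 2 <= INR k.
Hypothesis hK0 : 64 * Rpower 2 p <= INR K0.

Definition bb (n : nat) : R := 2 * PI * INR K0 * INR (S n) / lam q n.

Lemma lam_pos j : 0 < lam q j.
Proof. apply Rpower_pos. Qed.

Lemma P2_ge1 : 1 <= Rpower 2 p.
Proof. rewrite <- (Rpower_O 2) by lra. apply Rle_Rpower; lra. Qed.

Lemma K0_ge1 : 1 <= INR K0.
Proof. pose proof P2_ge1. lra. Qed.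

Lemma k_ge2 : (2 <= k)%nat.
Proof. destruct (Compare_dec.le_lt_dec 2 k) as [H|H]; auto.
  assert (INR k <= 1) by (replace 1 with (INR 1) by reflexivity; apply le_INR; lia). lra. Qed.

Lemma bb_pos n : 0 < bb n.
Proof.
  unfold bb. pose proof K0_ge1. pose proof (INRS_pos n). pose proof (lam_pos n).
  pose proof PI_gt3. apply Rdiv_lt_0_compat; [|exact H1]. assert (0 < 2 * PI) by lra. assert (0 < 2 * PI * INR K0) by nra. nra.
Qed.

Lemma sin_half n : sin (lam q n * bb n / 2) = 0.
Proof.
  apply sin_eq_0_1. exists (Z.of_nat (K0 * S n)).
  rewrite <- INR_IZR_INZ, mult_INR. unfold bb. pose proof (lam_pos n). field. lra.
Qed.

Lemma sin_full n : sin ((lam q n + lam q n) * bb n / 2) = 0.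
Proof.
  apply sin_eq_0_1. exists (Z.of_nat (2 * K0 * S n)).
  rewrite <- INR_IZR_INZ, !mult_INR. unfold bb. pose proof (lam_pos n). simpl. field. lra.
Qed.

Lemma g_cont : Cont g.
Proof. apply Cont_cpt. intros t. apply (g_cpt p q th A g hA hg). Qed.

Lemma sg_abs b w : w <> 0 -> Rabs (sg b w) <= 2 / Rabs w.
Proof.
  intros Hw. unfold sg. destruct (Req_EM_T w 0); [contradiction|].
  unfold Rdiv. rewrite !Rabs_mult, Rabs_inv, (Rabs_pos_eq 2) by lra.
  pose proof (Rabs_pos_lt w Hw). pose proof (SIN_bound (w * b * / 2)).
  assert (Rabs (sin (w * b * / 2)) <= 1) by (apply Rabs_le; lra).
  assert (0 < / Rabs w) by (apply Rinv_0_lt_compat; lra).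
  pose proof (Rabs_pos (sin (w * b * / 2))). nra.
Qed.

Lemma alg1 (a an B K d P : R) (k' : nat) : 0 < an -> 0 <= a -> 1 <= d -> 0 < B ->
  64 * P <= K -> 1 <= P -> a <= P * an * d ^ k' ->
  a * (B / (K * d)) ^ (k' + 2) <= B ^ (k' + 2) * an * / d ^ 2 / 64.
Proof.
  intros Han Ha Hd HB HK HP Ha2.
  assert (HK1 : 1 <= K) by lra.
  assert (Kk : K <= K ^ (k' + 2)).
  { rewrite <- (pow_1 K) at 1. apply Rle_pow; [lra| lia]. }
  assert (Hdk : 0 < d ^ k') by (apply pow_lt; lra).
  assert (HBk : 0 < B ^ (k' + 2)) by (apply pow_lt; lra).
  assert (E : (B / (K * d)) ^ (k' + 2) = B ^ (k' + 2) / (K ^ (k' + 2) * (d ^ k' * d ^ 2))).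
  { unfold Rdiv. rewrite Rpow_mult_distr, pow_inv, Rpow_mult_distr, (pow_add d). reflexivity. }
  rewrite E.
  assert (a * 64 <= K ^ (k' + 2) * d ^ k' * an) by nra.
  assert (0 < K ^ (k' + 2)) by lra.
  apply (Rmult_le_reg_r (64 * K ^ (k' + 2) * d ^ k' * d ^ 2 / B ^ (k' + 2))).
  { apply Rdiv_lt_0_compat; [|lra]. assert (0 < d ^ 2) by (apply pow_lt; lra).
    repeat apply Rmult_lt_0_compat; lra. }
  field_simplify; try (split; try lra; apply pow_nonzero; lra).
  assert (0 < d ^ 2) by (apply pow_lt; lra). nra.
Qed.


Definition cc t0 j := lam q j * t0 + th.
Definition Ph t0 n s := cos (lam q n * s + cc t0 n).
Definition Pj t0 n j s := cos (lam q j * s + cc t0 j) * Ph t0 n s.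

Lemma Pj_split t0 n j : Pj t0 n j = fun s =>
  / 2 * cos ((lam q j - lam q n) * s + (cc t0 j - cc t0 n)) +
  / 2 * cos ((lam q j + lam q n) * s + (cc t0 j + cc t0 n)).
Proof.
  apply functional_extensionality; intros s. unfold Pj, Ph.
  replace ((lam q j - lam q n) * s + (cc t0 j - cc t0 n)) with
    ((lam q j * s + cc t0 j) - (lam q n * s + cc t0 n)) by ring.
  replace ((lam q j + lam q n) * s + (cc t0 j + cc t0 n)) with
    ((lam q j * s + cc t0 j) + (lam q n * s + cc t0 n)) by ring.
  generalize (lam q j * s + cc t0 j) (lam q n * s + cc t0 n); intros u v.
  rewrite cos_minus, cos_plus. field.
Qed.

Lemma Cont_scos c w d : Cont (fun s => c * cos (w * s + d)).
Proof. apply Cont_mult. apply Cont_const. apply cos_cont. Qed.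

Lemma Tj_formula b t0 n j : Ak b k (Pj t0 n j) 0 =
  / 2 * (sg b (lam q j - lam q n) ^ k * cos ((lam q j - lam q n) * 0 + INR k * ((lam q j - lam q n) * b / 2) + (cc t0 j - cc t0 n))) +
  / 2 * (sg b (lam q j + lam q n) ^ k * cos ((lam q j + lam q n) * 0 + INR k * ((lam q j + lam q n) * b / 2) + (cc t0 j + cc t0 n))).
Proof.
  rewrite Pj_split, Ak_plus by apply Cont_scos.
  rewrite !Ak_scal by apply cos_cont. rewrite !Ak_cos. reflexivity.
Qed.

Lemma Tn t0 n : Ak (bb n) k (Pj t0 n n) 0 = (bb n) ^ k / 2.
Proof.
  rewrite Tj_formula. rewrite (sg_zero (bb n) (lam q n + lam q n)).
  2: { pose proof (lam_pos n); lra. }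
  2: apply sin_full.
  unfold sg. destruct (Req_EM_T (lam q n - lam q n) 0) as [_|H]; [|exfalso; apply H; ring].
  replace ((lam q n - lam q n) * 0 + INR k * ((lam q n - lam q n) * bb n / 2) + (cc t0 n - cc t0 n)) with 0 by field.
  rewrite cos_0. pose proof k_ge2. destruct k as [|k1]; [lia|]. simpl. field.
Qed.

Lemma sg_le n j w : j <> n -> Rabs (lam q j - lam q n) <= Rabs w ->
  Rabs (sg (bb n) w) <= bb n / (INR K0 * Rabs (INR j - INR n)).
Proof.
  intros Hjn Hw.
  set (d := Rabs (INR j - INR n)).
  assert (Hd : 1 <= d).
  { unfold d. destruct (proj1 (Nat.lt_gt_cases j n) Hjn) as [Hc|Hc].
    - rewrite Rabs_left1. assert (INR (S j) <= INR n) by (apply le_INR; lia). rewrite S_INR in *. lra.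
      assert (INR j < INR n) by (apply lt_INR; lia). lra.
    - rewrite Rabs_pos_eq. assert (INR (S n) <= INR j) by (apply le_INR; lia). rewrite S_INR in *. lra.
      assert (INR n < INR j) by (apply lt_INR; lia). lra. }
  pose proof (lam_gap q n j ltac:(lra) Hjn) as Hg. fold d in Hg.
  pose proof (Rpower_pos (INR (S n)) (q - 1)) as Hrp.
  assert (HG : 0 < Rpower (INR (S n)) (q - 1) * d) by nra.
  assert (Hw0 : w <> 0) by (intro E; rewrite E, Rabs_R0 in Hw; lra).
  eapply Rle_trans; [apply sg_abs; exact Hw0|].
  assert (Hb : bb n * Rpower (INR (S n)) (q - 1) = 2 * PI * INR K0).
  { unfold bb, lam. pose proof (INRS_pos n).
    assert (E : Rpower (INR (S n)) q = Rpower (INR (S n)) (q - 1) * INR (S n)).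
    { rewrite <- Rpower_split by lra. f_equal; ring. }
    rewrite E. field. lra. }
  pose proof PI_gt3. pose proof K0_ge1. pose proof (bb_pos n).
  apply Rle_trans with (2 / (Rpower (INR (S n)) (q - 1) * d)).
  { unfold Rdiv. apply Rmult_le_compat_l; [lra|]. apply Rinv_le_contravar; lra. }
  apply (Rmult_le_reg_r (Rpower (INR (S n)) (q - 1) * d * INR K0)). nra.
  field_simplify; try lra. replace (Rpower (INR (S n)) (q - 1) * bb n) with (2 * PI * INR K0) by (rewrite <- Hb; ring). nra.
Qed.

Lemma Tj_bound t0 n j : j <> n ->
  amp p j * Rabs (Ak (bb n) k (Pj t0 n j) 0) <= (bb n) ^ k * amp p n * wf n j / 64.
Proof.
  intros Hjn.
  set (d := Rabs (INR j - INR n)).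
  assert (Hd : 1 <= d).
  { unfold d. destruct (proj1 (Nat.lt_gt_cases j n) Hjn) as [Hc|Hc].
    - rewrite Rabs_left1. assert (INR (S j) <= INR n) by (apply le_INR; lia). rewrite S_INR in *. lra.
      assert (INR j < INR n) by (apply lt_INR; lia). lra.
    - rewrite Rabs_pos_eq. assert (INR (S n) <= INR j) by (apply le_INR; lia). rewrite S_INR in *. lra.
      assert (INR n < INR j) by (apply lt_INR; lia). lra. }
  set (X := bb n / (INR K0 * d)).
  pose proof (bb_pos n). pose proof K0_ge1.
  assert (HX : 0 <= X) by (unfold X; apply Rlt_le, Rdiv_lt_0_compat; nra).
  assert (S1 : Rabs (sg (bb n) (lam q j - lam q n)) <= X) by (apply sg_le; auto; lra).
  assert (S2 : Rabs (sg (bb n) (lam q j + lam q n)) <= X).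
  { apply sg_le; auto. pose proof (lam_pos j); pose proof (lam_pos n).
    rewrite (Rabs_pos_eq (lam q j + lam q n)) by lra. apply Rabs_le; lra. }
  assert (T : Rabs (Ak (bb n) k (Pj t0 n j) 0) <= X ^ k).
  { rewrite Tj_formula.
    set (s1 := sg (bb n) (lam q j - lam q n)) in *. set (s2 := sg (bb n) (lam q j + lam q n)) in *.
    match goal with |- Rabs (/ 2 * (_ * cos ?a) + / 2 * (_ * cos ?b)) <= _ =>
      set (c1 := cos a); set (c2 := cos b) end.
    assert (Rabs c1 <= 1) by (unfold c1; apply Rabs_le, COS_bound).
    assert (Rabs c2 <= 1) by (unfold c2; apply Rabs_le, COS_bound).
    assert (Rabs (s1 ^ k) <= X ^ k) by (rewrite <- RPow_abs; apply pow_incr; split; [apply Rabs_pos|auto]).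
    assert (Rabs (s2 ^ k) <= X ^ k) by (rewrite <- RPow_abs; apply pow_incr; split; [apply Rabs_pos|auto]).
    eapply Rle_trans; [apply Rabs_triang|]. rewrite !Rabs_mult, Rabs_inv, (Rabs_pos_eq 2) by lra.
    pose proof (Rabs_pos c1). pose proof (Rabs_pos c2). pose proof (Rabs_pos (s1 ^ k)). pose proof (Rabs_pos (s2 ^ k)).
    nra. }
  assert (Hw : wf n j = / d ^ 2).
  { unfold wf, d. destruct (Nat.eq_dec j n); [contradiction|]. rewrite <- !Rsqr_pow2, <- Rsqr_abs. reflexivity. }
  rewrite Hw.
  pose proof (amp_pos p j). pose proof (amp_pos p n).
  pose proof k_ge2. destruct (Nat.le_exists_sub 2 k H3) as [k' [Ek _]].
  assert (Hk' : p <= INR k') by (rewrite Ek, plus_INR in hk; simpl in hk; lra).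
  pose proof (amp_ratio p n j k' ltac:(lra) Hk' Hjn) as Ha. fold d in Ha.
  apply Rle_trans with (amp p j * X ^ k).
  { apply Rmult_le_compat_l; lra. }
  rewrite Ek. unfold X.
  replace (bb n ^ (k' + 2) * amp p n * / d ^ 2 / 64) with (bb n ^ (k' + 2) * amp p n * / d ^ 2 / 64) by reflexivity.
  apply alg1 with (P := Rpower 2 p); auto; try lra. apply P2_ge1.
Qed.


Lemma sum_Tj_bound t0 n M : (n <= M)%nat ->
  Rabs (sum_f_R0 (fun j => amp p j * Ak (bb n) k (Pj t0 n j) 0) M - amp p n * (bb n ^ k / 2))
  <= bb n ^ k * amp p n / 16.
Proof.
  intros HM.
  set (ind := fun j => if Nat.eq_dec j n then amp p n * (bb n ^ k / 2) else 0).
  set (u := fun j => amp p j * Ak (bb n) k (Pj t0 n j) 0 - ind j).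
  assert (E : sum_f_R0 (fun j => amp p j * Ak (bb n) k (Pj t0 n j) 0) M =
              sum_f_R0 u M + sum_f_R0 ind M).
  { rewrite <- sum_plus. apply sum_eq. intros j _. unfold u. ring. }
  rewrite E. unfold ind. rewrite (ind_sum n M _ HM). fold ind.
  replace (sum_f_R0 u M + amp p n * (bb n ^ k / 2) - amp p n * (bb n ^ k / 2)) with (sum_f_R0 u M) by ring.
  eapply Rle_trans; [apply sum_f_R0_triangle|].
  apply Rle_trans with (sum_f_R0 (fun j => wf n j * (bb n ^ k * amp p n / 64)) M).
  { apply sum_Rle. intros j _. unfold u, ind.
    destruct (Nat.eq_dec j n) as [->|Hjn].
    - rewrite Tn. unfold wf. destruct (Nat.eq_dec n n); [|contradiction].
      replace (amp p n * (bb n ^ k / 2) - amp p n * (bb n ^ k / 2)) with 0 by ring.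
      rewrite Rabs_R0. lra.
    - rewrite Rminus_0_r, Rabs_mult, (Rabs_pos_eq (amp p j)) by (left; apply amp_pos).
      eapply Rle_trans; [apply Tj_bound; auto|]. right; field. }
  rewrite <- scal_sum.
  pose proof (wsum n M). pose proof (bb_pos n). pose proof (amp_pos p n).
  assert (0 < bb n ^ k) by (apply pow_lt; lra).
  assert (0 < bb n ^ k * amp p n / 64) by (apply Rdiv_lt_0_compat; nra).
  nra.
Qed.

Lemma core n t0 l E : 0 <= E ->
  (forall s, 0 <= s <= INR k * bb n -> Rabs (g (t0 + s) - g t0 - l * s) <= E * s) ->
  3 / 8 * amp p n <= E * (INR k * bb n).
Proof.
  intros HE HD.
  pose proof (bb_pos n) as Hb. pose proof (amp_pos p n) as Han.
  destruct (rem_small p A hA (amp p n / 16) ltac:(lra)) as [M0 HM0].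
  set (M := Nat.max n M0).
  assert (Hr := HM0 M ltac:(lia)). set (r := A - sum_f_R0 (amp p) M) in *.
  assert (Hr0 : 0 <= r) by (unfold r; pose proof (AP_le p A hA M); lra).
  set (Phi := Ph t0 n).
  set (F1 := fun s => sum_f_R0 (fun j => amp p j * Pj t0 n j s) M).
  set (F4 := fun s => (g (t0 + s) - sum_f_R0 (gt p q th (t0 + s)) M) * Phi s).
  assert (Edec : (fun s => (g (t0 + s) - g t0 - l * s) * Phi s) =
     fun s => ((F1 s + (- g t0) * Phi s) + (- l) * (s * Phi s)) + F4 s).
  { apply functional_extensionality; intros s. unfold F1, F4, Phi.
    assert (sum_f_R0 (fun j => amp p j * Pj t0 n j s) M = Ph t0 n s * sum_f_R0 (gt p q th (t0 + s)) M).
    { rewrite scal_sum. apply sum_eq. intros j _. unfold Pj, gt, cc.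
      replace ((t0 + s) * lam q j + th) with (lam q j * s + (lam q j * t0 + th)) by ring. ring. }
    rewrite H. ring. }
  assert (CPhi : Cont Phi) by (unfold Phi, Ph; apply cos_cont).
  assert (CPj : forall j, Cont (fun s => amp p j * Pj t0 n j s)).
  { intros j. apply Cont_mult. apply Cont_const. unfold Pj. apply Cont_mult. apply cos_cont. exact CPhi. }
  assert (CF1 : Cont F1) by (unfold F1; apply (Cont_sum (fun j s => amp p j * Pj t0 n j s)); exact CPj).
  assert (C2 : Cont (fun s => (- g t0) * Phi s)) by (apply Cont_mult; [apply Cont_const|exact CPhi]).
  assert (C3 : Cont (fun s => (- l) * (s * Phi s))).
  { apply Cont_mult; [apply Cont_const|]. unfold Phi, Ph. apply ycos_cont. }
  assert (CS : Cont (fun t => sum_f_R0 (gt p q th t) M)) by (apply Cont_cpt; apply S_cpt).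
  assert (CF4 : Cont F4).
  { unfold F4. apply Cont_mult; [|exact CPhi]. apply Cont_minus.
    apply Cont_shift, g_cont. apply (Cont_shift (fun t => sum_f_R0 (gt p q th t) M)), CS. }
  assert (CD : Cont (fun s => (g (t0 + s) - g t0 - l * s) * Phi s)).
  { rewrite Edec. repeat apply Cont_plus; auto. }
  set (JD := Ak (bb n) k (fun s => (g (t0 + s) - g t0 - l * s) * Phi s) 0).
  assert (B1 : Rabs JD <= (E * (INR k * bb n)) * bb n ^ k).
  { apply Ak_bound; auto. lra. intros y Hy.
    rewrite Rabs_mult. assert (Rabs (Phi y) <= 1) by (unfold Phi, Ph; apply Rabs_le, COS_bound).
    assert (Rabs (g (t0 + y) - g t0 - l * y) <= E * y) by (apply HD; lra).
    pose proof (Rabs_pos (g (t0 + y) - g t0 - l * y)). pose proof (Rabs_pos (Phi y)). nra. }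
  assert (EJ : JD = sum_f_R0 (fun j => amp p j * Ak (bb n) k (Pj t0 n j) 0) M + Ak (bb n) k F4 0).
  { unfold JD. rewrite Edec.
    rewrite Ak_plus; [| repeat apply Cont_plus; auto | auto].
    rewrite Ak_plus; [| apply Cont_plus; auto | auto].
    rewrite Ak_plus; auto.
    rewrite (Ak_scal (bb n) k (- g t0) Phi CPhi).
    rewrite (Ak_scal (bb n) k (- l) (fun s => s * Phi s)) by (unfold Phi, Ph; apply ycos_cont).
    unfold Phi at 1, Ph. rewrite Ak_cos_zero; [| pose proof k_ge2; lia | pose proof (lam_pos n); lra | apply sin_half].
    unfold Phi, Ph. rewrite Ak_ycos_zero; [| apply k_ge2 | pose proof (lam_pos n); lra | apply sin_half].
    unfold F1. rewrite (Ak_sum (bb n) k (fun j s => amp p j * Pj t0 n j s)) by exact CPj.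
    assert (sum_f_R0 (fun j => Ak (bb n) k (fun s => amp p j * Pj t0 n j s) 0) M =
            sum_f_R0 (fun j => amp p j * Ak (bb n) k (Pj t0 n j) 0) M).
    { apply sum_eq. intros j _. rewrite (Ak_scal (bb n) k (amp p j) (Pj t0 n j)). reflexivity.
      unfold Pj. apply Cont_mult. apply cos_cont. exact CPhi. }
    rewrite H. ring. }
  assert (B4 : Rabs (Ak (bb n) k F4 0) <= r * bb n ^ k).
  { apply Ak_bound; auto. lra. intros y _. unfold F4. rewrite Rabs_mult.
    assert (Rabs (Phi y) <= 1) by (unfold Phi, Ph; apply Rabs_le, COS_bound).
    pose proof (rem_bound p q th A g hA hg (t0 + y) M). fold r in H0.
    pose proof (Rabs_pos (g (t0 + y) - sum_f_R0 (gt p q th (t0 + y)) M)). pose proof (Rabs_pos (Phi y)). nra. }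
  pose proof (sum_Tj_bound t0 n M ltac:(lia)) as B3.
  rewrite EJ in B1.
  set (S1 := sum_f_R0 (fun j => amp p j * Ak (bb n) k (Pj t0 n j) 0) M) in *.
  set (F4v := Ak (bb n) k F4 0) in *.
  assert (Hbk : 0 < bb n ^ k) by (apply pow_lt; lra).
  apply (Rmult_le_reg_r (bb n ^ k)); auto.
  apply Rabs_le_between in B3. apply Rabs_le_between in B4.
  assert (S1 + F4v <= E * (INR k * bb n) * bb n ^ k) by (apply Rabs_le_between in B1; lra).
  assert (r * bb n ^ k <= amp p n / 16 * bb n ^ k) by (apply Rmult_le_compat_r; lra).
  nra.
Qed.

End Core.

Lemma big_n C : exists n, C < INR (S n).
Proof.
  destruct (INR_archimed 1 C ltac:(lra)) as [n Hn]. exists n. rewrite S_INR. lra.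
Qed.

Lemma nu_lam_eq q n : INR (S n) / lam q n = Rpower (INR (S n)) (1 - q).
Proof.
  unfold lam. pose proof (INRS_pos n).
  unfold Rminus. rewrite Rpower_plus, Rpower_1, Rpower_Ropp by lra. reflexivity.
Qed.

Lemma Gen p q th A g : infinite_sum (amp p) A -> (forall t, infinite_sum (gt p q th t) (g t)) ->
  1 < p -> p + 1 <= q ->
  (forall t, continuity_pt g t) /\ (forall t, ~ (exists l, derivable_pt_lim g t l)) /\
  (p + 1 < q -> forall t, ~ lipschitz_at g t).
Proof.
  intros hA hg hp hq.
  destruct (INR_archimed 1 (p + 2) ltac:(lra)) as [k Hk].
  destruct (INR_archimed 1 (64 * Rpower 2 p) ltac:(lra)) as [K0 HK0].
  assert (hk : p + 2 <= INR k) by lra. assert (hK0 : 64 * Rpower 2 p <= INR K0) by lra.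
  pose proof (K0_ge1 p K0 hp hK0) as HK1.
  pose proof PI_gt3 as HPI.
  assert (Hk2 : 0 < INR k) by lra.
  set (C0 := INR k * (2 * PI * INR K0)).
  assert (HC0 : 0 < C0) by (unfold C0; apply Rmult_lt_0_compat; [lra|]; apply Rmult_lt_0_compat; lra).
  assert (Hsmall : forall n, INR k * bb q K0 n <= C0 / INR (S n)).
  { intros n. unfold bb, C0. pose proof (nu_over_lam p q n hp hq). pose proof (amp_le_inv p n ltac:(lra)).
    pose proof (INRS_pos n). pose proof (lam_pos q n).
    replace (2 * PI * INR K0 * INR (S n) / lam q n) with (2 * PI * INR K0 * (INR (S n) / lam q n)) by (field; lra).
    apply Rle_trans with (INR k * (2 * PI * INR K0) * / INR (S n)); [|right; field; lra].
    replace (INR k * (2 * PI * INR K0 * (INR (S n) / lam q n))) with (INR k * (2 * PI * INR K0) * (INR (S n) / lam q n)) by ring.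
    apply Rmult_le_compat_l. fold C0; lra. lra. }
  split; [|split].
  - apply (g_cpt p q th A g hA hg).
  - intros t0 [l Hl].
    set (E := 3 / (16 * C0)).
    assert (HE : 0 < E) by (unfold E; apply Rdiv_lt_0_compat; lra).
    destruct (Hl E HE) as [[d Hd] Hdl]. simpl in Hdl.
    destruct (big_n (C0 / d)) as [n Hn].
    assert (Hnu := INRS_pos n).
    assert (Hkb : INR k * bb q K0 n < d).
    { eapply Rle_lt_trans; [apply Hsmall|]. apply (Rmult_lt_reg_r (INR (S n))); auto.
      apply (Rmult_lt_reg_r (/ d)). apply Rinv_0_lt_compat; lra.
      field_simplify; try lra; unfold Rdiv in Hn; nra. }
    assert (Hc := core p q th A g k K0 hA hg hp hq hk hK0 n t0 l E ltac:(lra)).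
    assert (3 / 8 * amp p n <= E * (INR k * bb q K0 n)).
    { apply Hc. intros s Hs. destruct (Req_dec s 0) as [->|Hs0].
      - replace (g (t0 + 0) - g t0 - l * 0) with 0 by (rewrite Rplus_0_r; ring).
        rewrite Rabs_R0; lra.
      - assert (Hs1 : Rabs s < d) by (rewrite Rabs_pos_eq; lra).
        specialize (Hdl s Hs0 Hs1).
        replace (g (t0 + s) - g t0 - l * s) with (s * ((g (t0 + s) - g t0) / s - l)) by (field; auto).
        rewrite Rabs_mult, (Rabs_pos_eq s) by lra. rewrite (Rmult_comm E s). apply Rmult_le_compat_l; lra. }
    assert (bb q K0 n <= 2 * PI * INR K0 * amp p n).
    { unfold bb. pose proof (nu_over_lam p q n hp hq). pose proof (lam_pos q n).
      replace (2 * PI * INR K0 * INR (S n) / lam q n) with (2 * PI * INR K0 * (INR (S n) / lam q n)) by (field; lra).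
      apply Rmult_le_compat_l; [nra|lra]. }
    pose proof (amp_pos p n).
    assert (E * (INR k * bb q K0 n) <= E * C0 * amp p n).
    { unfold C0. assert (0 <= E * INR k) by nra. nra. }
    assert (E * C0 = 3 / 16) by (unfold E; field; lra).
    nra.
  - intros hq' t0 [L [eta [HL [Heta HLip]]]].
    set (dl := q - 1 - p). assert (Hdl : 0 < dl) by (unfold dl; lra).
    set (c := 3 / (8 * L * C0)). assert (Hc : 0 < c) by (unfold c; apply Rdiv_lt_0_compat; nra).
    set (X := / c / dl).
    destruct (big_n (Rmax (exp X) (C0 / eta))) as [n Hn].
    assert (Hnu := INRS_pos n).
    assert (H1 : exp X < INR (S n)) by (eapply Rle_lt_trans; [apply Rmax_l|exact Hn]).
    assert (H2 : C0 / eta < INR (S n)) by (eapply Rle_lt_trans; [apply Rmax_r|exact Hn]).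
    assert (Hkb : INR k * bb q K0 n < eta).
    { eapply Rle_lt_trans; [apply Hsmall|]. apply (Rmult_lt_reg_r (INR (S n))); auto.
      apply (Rmult_lt_reg_r (/ eta)). apply Rinv_0_lt_compat; lra.
      field_simplify; try lra; unfold Rdiv in H2; nra. }
    assert (Hc3 := core p q th A g k K0 hA hg hp hq hk hK0 n t0 0 L ltac:(lra)).
    assert (K : 3 / 8 * amp p n <= L * (INR k * bb q K0 n)).
    { apply Hc3. intros s Hs.
      replace (g (t0 + s) - g t0 - 0 * s) with (g (t0 + s) - g t0) by ring.
      eapply Rle_trans; [apply HLip; lra|]. right. f_equal.
      replace (t0 + s - t0) with s by ring. apply Rabs_pos_eq; lra. }
    set (rho := Rpower (INR (S n)) (1 + p - q)).
    assert (Erho : bb q K0 n = 2 * PI * INR K0 * (amp p n * rho)).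
    { unfold bb. pose proof (lam_pos q n).
      replace (2 * PI * INR K0 * INR (S n) / lam q n) with (2 * PI * INR K0 * (INR (S n) / lam q n)) by (field; lra).
      rewrite nu_lam_eq. unfold amp, rho. rewrite <- Rpower_plus. f_equal. f_equal. ring. }
    assert (Hrho : rho < c).
    { unfold rho. replace (1 + p - q) with (- dl) by (unfold dl; ring). rewrite Rpower_Ropp.
      assert (Hln : X < ln (INR (S n))).
      { rewrite <- (ln_exp X). apply ln_increasing; [apply exp_pos|exact H1]. }
      assert (Hpow : / c < Rpower (INR (S n)) dl).
      { unfold Rpower. apply Rlt_trans with (1 + / c).
        lra.
        apply Rle_lt_trans with (exp (/ c)).
        destruct (Req_dec (/ c) 0) as [E0|E0]. rewrite E0, exp_0. lra. left. apply exp_ineq1; auto.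
        apply exp_increasing. unfold X in Hln.
        apply (Rmult_lt_reg_r (/ dl)). apply Rinv_0_lt_compat; lra.
        replace (dl * ln (INR (S n)) * / dl) with (ln (INR (S n))) by (field; lra).
        replace (/ c * / dl) with (/ c / dl) by reflexivity. lra. }
      pose proof (Rpower_pos (INR (S n)) dl).
      rewrite <- (Rinv_inv c). apply Rinv_lt_contravar; auto.
      apply Rmult_lt_0_compat; auto. apply Rinv_0_lt_compat; lra. }
    rewrite Erho in K. pose proof (amp_pos p n).
    assert (0 <= rho) by (unfold rho; left; apply Rpower_pos).
    assert (L * (INR k * (2 * PI * INR K0 * (amp p n * rho))) = amp p n * (L * C0 * rho)) by (unfold C0; ring).
    assert (L * C0 * c = 3 / 8) by (unfold c; field; lra).
    assert (L * C0 * rho < L * C0 * c) by (apply Rmult_lt_compat_l; nra).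
    nra.
Qed.

Lemma isum_ext f1 f2 l : (forall j, f1 j = f2 j) -> infinite_sum f1 l -> infinite_sum f2 l.
Proof.
  intros E H e He. destruct (H e He) as [N HN]. exists N. intros n Hn.
  rewrite <- (sum_eq f1 f2 n) by (intros; apply E). apply HN, Hn.
Qed.

Lemma cmod_le x y : cmod x y <= Rabs x + Rabs y.
Proof.
  unfold cmod. rewrite <- (sqrt_Rsqr (Rabs x + Rabs y)).
  2: { pose proof (Rabs_pos x); pose proof (Rabs_pos y); lra. }
  apply sqrt_le_1_alt. unfold Rsqr.
  pose proof (Rabs_pos x); pose proof (Rabs_pos y).
  assert (x * x = Rabs x * Rabs x) by (rewrite <- Rabs_mult; rewrite Rabs_pos_eq; [ring| nra]).
  assert (y * y = Rabs y * Rabs y) by (rewrite <- Rabs_mult; rewrite Rabs_pos_eq; [ring| nra]).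
  nra.
Qed.

Lemma cmod_ge_l x y : Rabs x <= cmod x y.
Proof.
  unfold cmod. rewrite <- sqrt_Rsqr_abs. apply sqrt_le_1_alt. unfold Rsqr. nra.
Qed.

Theorem mainTheorem8 (p q : R) (Fre Fim : R -> R)
  (hp : 1 < p) (hq : p + 1 <= q)
  (hFre : forall t, infinite_sum (term_re p q t) (Fre t))
  (hFim : forall t, infinite_sum (term_im p q t) (Fim t)) :
  ((forall t, ccontinuity_pt Fre Fim t) /\ continuity Fre /\ continuity Fim /\
   (forall t, ~ cderivable_pt Fre Fim t) /\
   (forall t, ~ (exists l, derivable_pt_lim Fre t l)) /\ (forall t, ~ (exists l, derivable_pt_lim Fim t l))) /\
  (p + 1 < q ->
   (forall t, ~ clipschitz_at Fre Fim t) /\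
   (forall t, ~ lipschitz_at Fre t) /\ (forall t, ~ lipschitz_at Fim t)).
Proof.
  assert (hA : infinite_sum (amp p) (Fre 0)).
  { apply (isum_ext (term_re p q 0)); [|apply hFre].
    intros j. unfold term_re, amp. rewrite Rmult_0_l, cos_0. ring. }
  assert (hR : forall t, infinite_sum (gt p q 0 t) (Fre t)).
  { intros t. apply (isum_ext (term_re p q t)); [|apply hFre].
    intros j. unfold term_re, gt, amp, lam. rewrite Rplus_0_r. reflexivity. }
  assert (hI : forall t, infinite_sum (gt p q (- (PI / 2)) t) (Fim t)).
  { intros t. apply (isum_ext (term_im p q t)); [|apply hFim].
    intros j. unfold term_im, gt, amp, lam.
    rewrite cos_plus, cos_neg, sin_neg, cos_PI2, sin_PI2. ring. }
  destruct (Gen p q 0 (Fre 0) Fre hA hR hp hq) as [RC [RD RL]].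
  destruct (Gen p q (- (PI / 2)) (Fre 0) Fim hA hI hp hq) as [IC [ID IL]].
  split; [split; [|split; [|split; [|split; [|split]]]] | ].
  - intros t e He.
    destruct (cpt_elim _ _ (RC t) (e / 2) ltac:(lra)) as [d1 [Hd1 K1]].
    destruct (cpt_elim _ _ (IC t) (e / 2) ltac:(lra)) as [d2 [Hd2 K2]].
    exists (Rmin d1 d2). split. apply Rmin_glb_lt; auto.
    intros y Hy. eapply Rle_lt_trans; [apply cmod_le|].
    assert (Rabs (y - t) < d1) by (eapply Rlt_le_trans; [exact Hy|apply Rmin_l]).
    assert (Rabs (y - t) < d2) by (eapply Rlt_le_trans; [exact Hy|apply Rmin_r]).
    specialize (K1 y H). specialize (K2 y H0). lra.
  - exact RC.
  - exact IC.
  - intros t [lr [li H]]. apply (RD t). exists lr. intros e He.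
    destruct (H e He) as [d [Hd K]]. exists (mkposreal d Hd). simpl.
    intros h Hh0 Hh. eapply Rle_lt_trans; [apply cmod_ge_l|]. apply K; auto.
  - exact RD.
  - exact ID.
  - intros hq'. split; [|split].
    + intros t [L [eta [HL [He H]]]]. apply (RL hq' t). exists L, eta. repeat split; auto.
      intros y Hy. eapply Rle_trans; [apply cmod_ge_l|]. apply H, Hy.
    + apply RL, hq'.
    + apply IL, hq'.
Qed.
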